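(* If $R$ is a finite commutative ring, then the set of all free cyclic submodules of $R^2$ equals the projective line $\mathbb{P}(R)$.
   Context: $R^2$ is the free $R$-module of pairs; $R(a,b)=\{(\alpha a,\alpha b):\alpha\in R\}$ is free if $r(a,b)=(0,0)$ implies $r=0$. A pair $(a,b)$ is admissible if there exist $c,d\in R$ with $\begin{pmatrix}a&b\\c&d\end{pmatrix}\in GL_2(R)$. The projective line is $\mathbb{P}(R)=\{R(a,b): (a,b)\in R^2 \text{ admissible}\}$, equivalently the orbit of $R(1,0)$ under the right action of $GL_2(R)$. *)

(* Defs.v *)
From HB Require Import structures.
From mathcomp Require Import all_boot all_order all_algebra.
Set Implicit Arguments. Unset Strict Implicit. Unset Printing Implicit Defensive.
Import GRing.Theory.
Local Open Scope ring_scope.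

Definition mx2 (R : comUnitRingType) (a b c d : R) : 'M[R]_2 :=
  \matrix_(i < 2, j < 2)
    if i == 0 :> nat then (if j == 0 :> nat then a else b)
    else (if j == 0 :> nat then c else d).

Definition cyc (R : finComUnitRingType) (a b : R) : {set R * R} :=
  [set (r * a, r * b) | r : R].

Definition free_gen (R : comUnitRingType) (a b : R) : Prop :=
  forall r : R, (r * a, r * b) = (0, 0) -> r = 0.

Definition admissible (R : comUnitRingType) (a b : R) : Prop :=
  exists c d : R, mx2 a b c d \in unitmx.

(* Main.v *)
Require Import Defs.
From HB Require Import structures.
From mathcomp Require Import all_boot all_order all_algebra.
From mathcomp Require Import ring zify.
Import GRing.Theory.
Local Open Scope ring_scope.
Lemma det_mx2 (R : comUnitRingType) (a b c d : R) : \det (mx2 a b c d) = a * d - b * c.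
Proof.
rewrite (expand_det_row _ 0) !big_ord_recl big_ord0 /cofactor /=.
rewrite !det_mx11 !mxE /= /bump /=. rewrite expr0 expr1. ring.
Qed.

Lemma pow_idem (R : finComUnitRingType) (x : R) :
  exists N, (0 < N)%N /\ x ^+ N * x ^+ N = x ^+ N.
Proof.
have : ~~ injectiveb (fun k : 'I_(#|R|.+1) => x ^+ k).
  apply/injectiveP => inj. have := leq_card _ inj. by rewrite card_ord ltnn.
move/injectivePn => [i [j neq eq]].
wlog lt : i j neq eq / (i < j)%N.
  move=> H. case: (ltngtP i j) => h. exact: (H i j).
  apply: (H j i) => //. by rewrite eq_sym. 
  by move/val_inj: h neq => ->; rewrite eqxx.
set d := (j - i)%N.
have base : x ^+ (i + d) = x ^+ i by rewrite subnKC ?(ltnW lt).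
have key0 : forall k, x ^+ (i + k * d) = x ^+ i.
  elim=> [|k IH]; first by rewrite mul0n addn0.
  by rewrite mulSn addnA exprD base -exprD IH.
have key : forall k m, (i <= m)%N -> x ^+ (m + k * d) = x ^+ m.
  move=> k m hm. rewrite -(subnK hm) -addnA exprD key0 -exprD //.
exists ((i.+1) * d)%N; split.
  by rewrite muln_gt0 subn_gt0 lt.
rewrite -exprD key //. rewrite /d; nia.
Qed.

Lemma lastnz (R : comUnitRingType) (r x : R) p :
  r != 0 -> r * x ^+ p = 0 -> exists i, r * x ^+ i != 0 /\ r * x ^+ i * x = 0.
Proof.
move=> rn; elim: p => [|p IH] h; first by rewrite expr0 mulr1 in h; rewrite h eqxx in rn.
case: (eqVneq (r * x ^+ p) 0) => hp; first exact: IH.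
by exists p; rewrite -mulrA -exprSr.
Qed.

Lemma nil_idem (R : comUnitRingType) (e x : R) N : (0 < N)%N ->
  e * e = e -> (x * (1 - e)) ^+ N = x ^+ N * (1 - e).
Proof.
move=> hN he; rewrite exprMn; congr (_ * _).
case: N hN => // N _; elim: N => [|N IH]; first by rewrite expr1.
by rewrite exprS IH mulrBr mulr1 mulrBl mul1r he subrr subr0.
Qed.

Lemma unimod (R : finComUnitRingType) (a b : R) :
  free_gen a b -> exists x y : R, x * a + y * b = 1.
Proof.
move=> fr.
have [N [N0 he]] := @pow_idem R a. set e := a ^+ N in he.
have [M [M0 hf]] := @pow_idem R (b * (1 - e)). set f := _ ^+ M in hf.
have fE : f = b ^+ M * (1 - e) by rewrite /f nil_idem.
have ef : e * f = 0.
  by rewrite fE mulrCA mulrBr mulr1 he subrr mulr0.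
set z := (1 - e) * (1 - f).
have z0 : z = 0.
  apply/eqP; apply/negPn/negP => zn.
  have za : z * a ^+ N = 0.
    by rewrite -/e /z mulrAC mulrBl mul1r he subrr mul0r.
  have [i [h1 h2]] := @lastnz _ _ _ _ zn za.
  have zb : z * a ^+ i * b ^+ M = 0.
    have zbM : z * b ^+ M = 0.
      by rewrite /z mulrAC (mulrC (1 - e)) -fE mulrBr mulr1 hf subrr.
    by rewrite mulrAC zbM mul0r.
  have [j [h3 h4]] := @lastnz _ _ _ _ h1 zb.
  move/negP: h3; apply; apply/eqP; apply: fr; congr (_, _) => //.
  by rewrite mulrAC h2 mul0r.
exists (a ^+ N.-1), (b ^+ M.-1 * (1 - e)).
rewrite -exprSr prednK // mulrAC -exprSr prednK // -fE -/e.
move: z0; rewrite /z mulrBl mul1r mulrBr mulr1 ef subr0 => /eqP.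
by rewrite subr_eq0 => /eqP <-; rewrite subrK.
Qed.


Theorem mainTheorem14 (R : finComUnitRingType) (S : {set R * R}) :
  (exists a b : R, free_gen a b /\ S = cyc a b) <->
  (exists a b : R, admissible a b /\ S = cyc a b).
Proof.
split=> [[a [b [fr ->]]]|[a [b [[c [d ad]] ->]]]]; exists a, b; split=> //.
  have [x [y h]] := @unimod R a b fr.
  exists (- y), x; rewrite unitmxE det_mx2.
  by rewrite mulrN opprK (mulrC a) (mulrC b) h unitr1.
move=> r [h1 h2].
rewrite unitmxE det_mx2 in ad.
have : r * (a * d - b * c) = 0 by rewrite mulrBr !mulrA h1 h2 !mul0r subrr.
by move/(congr1 (fun t => t * (a * d - b * c)^-1)); rewrite -mulrA mulrV // mulr1 mul0r.
Qed.
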